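(* Let $N$ be an odd positive integer, let $p$ be the smallest prime factor of $N$, and let $K\ge N$ be a positive integer. Let $a_2,a_1\in\mathbb{Z}_N$ with $\gcd(a_2,N)=1$, and let $g:\mathbb{Z}_N\to\mathbb{Z}_N$, $g(x)=a_2x^2+a_1x$. Let $\phi:\mathbb{Z}_N\to\mathbb{Z}_K$ send the residue class of $x\in\{0,1,\dots,N-1\}$ to the residue class of the same integer $x$ modulo $K$, and let $f=\phi\circ g:\mathbb{Z}_N\to\mathbb{Z}_K$. For integers $a,b$ consider the equation $f(x+a)-f(x)=b$ in the unknown $x\in\mathbb{Z}_N$, where $x+a$ is computed in $\mathbb{Z}_N$ and the equation is read in $\mathbb{Z}_K$. Then: (1) if $K=N$, for every integer $a$ with $-p<a<p$, $a\neq 0$, and every integer $b$ with $-N<b<N$, the equation has at most one solution $x\in\mathbb{Z}_N$; (2) if $N<K<2N-1$, for every integer $a$ with $-p<a<p$, $a\ne 0$, and every integer $b$ with $-K+N-1<b<K-N+1$, the equation has at most one solution $x\in\mathbb{Z}_N$; (3) if $K\ge 2N-1$, for every integer $a$ with $-p<a<p$, $a\neq 0$, and every integer $b$ with $-K<b<K$, the equation has at most one solution $x\in\mathbb{Z}_N$.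
   Context: $\mathbb{Z}_N$ denotes the ring of integers modulo $N$. *)

(* Defs.v *)
(* Z_N is modelled by residues 'I_N = {0,...,N-1};
   arithmetic in Z_N / Z_K is done on integer representatives with intdiv's %%. *)
From mathcomp Require Import all_boot all_order all_algebra.
Set Implicit Arguments. Unset Strict Implicit. Unset Printing Implicit Defensive.
Import GRing.Theory Num.Theory.
Local Open Scope ring_scope.

Definition gmap (N : nat) (a2 a1 : int) (x : int) : int :=
  ((a2 * x ^+ 2 + a1 * x) %% (N%:Z))%Z.

Definition phimap (K : nat) (r : int) : int := (r %% (K%:Z))%Z.

Definition fmap (N K : nat) (a2 a1 : int) (x : int) : int :=
  phimap K (gmap N a2 a1 x).

Definition is_sol (N K : nat) (a2 a1 : int) (a b : int) (x : 'I_N) : Prop :=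
  (fmap N K a2 a1 (((x%:Z) + a) %% (N%:Z))%Z - fmap N K a2 a1 (x%:Z)
     = b %[mod (K%:Z)])%Z.

Definition at_most_one_sol (N K : nat) (a2 a1 : int) (a b : int) : Prop :=
  forall x y : 'I_N, is_sol K a2 a1 a b x -> is_sol K a2 a1 a b y -> x = y.

(* Main.v *)
Require Import Defs.
From mathcomp Require Import all_boot all_order all_algebra.
From mathcomp Require Import zify ring lra.
Import GRing.Theory Num.Theory.
Local Open Scope ring_scope.

Lemma dvd_small (K m : int) : 0 < K -> (K %| m)%Z -> -K < m < K -> m = 0.
Proof. move=> K0 /dvdzP [k ->] /andP[h1 h2].
have : -1 < k < 1. apply/andP; split.
  rewrite -(ltr_pM2r K0) mulN1r //.
  rewrite -(ltr_pM2r K0) mul1r //.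
move=> /andP[]; lia.
Qed.

Lemma congP (N a2 a1 u v : int) : (N %| u - v)%Z ->
  (N %| (a2*u^+2 + a1*u) - (a2*v^+2+a1*v))%Z.
Proof.
move/dvdzP=>[k hk]; apply/dvdzP; exists (k*(a2*(u+v)+a1)).
have -> : u = v + k*N by rewrite -hk; ring.
ring.
Qed.

Lemma modP (N m : int) : (N %| (m %% N)%Z - m)%Z.
Proof.
apply/dvdzP; exists (-(m%/N)%Z).
have h := divz_eq m N.
set q := (m %/ N)%Z in h *. set r := (m %% N)%Z in h *.
rewrite h; ring.
Qed.

Lemma Fcong (N : nat) (a2 a1 a x : int) :
  (N%:Z %| (gmap N a2 a1 ((x+a) %% N%:Z)%Z - gmap N a2 a1 x)
            - (a2*((x+a)^+2 - x^+2) + a1*a))%Z.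
Proof.
rewrite /gmap.
set u := ((x+a) %% N%:Z)%Z.
have h1 := modP N (a2 * u ^+ 2 + a1 * u).
have h2 := congP _ a2 a1 _ _ (modP N (x+a)).
have h3 := modP N (a2 * x ^+ 2 + a1 * x).
have := rpredB (rpredD h1 h2) h3.
set A := ((a2 * u ^+ 2 + a1 * u) %% N)%Z.
set B := ((a2 * x ^+ 2 + a1 * x) %% N)%Z.
rewrite -/u.
congr (_ %| _)%Z; ring.
Qed.

Lemma coprime_small (N m : nat) : (0 < m)%N -> (m < pdiv N)%N -> coprime N m.
Proof.
move=> m0 mp; rewrite /coprime.
set g := gcdn N m.
have g0 : (0 < g)%N by rewrite gcdn_gt0 m0 orbT.
case: (ltngtP g 1) => // hg.
- by move: g0; rewrite ltnNge -ltnS hg.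
- have := pdiv_min_dvd hg (dvdn_gcdl N m).
  have := dvdn_leq m0 (dvdn_gcdr N m).
  rewrite -/g => h h'.
  have := leq_ltn_trans (leq_trans h' h) mp. by rewrite ltnn.
Qed.

Lemma core (N : nat) (a2 a : int) (x y : int) :
  (0 < N)%N -> coprime N `|a2| -> odd N -> a != 0 -> (`|a| < pdiv N)%N ->
  0 <= x < N%:Z -> 0 <= y < N%:Z ->
  (N%:Z %| a2 * 2 * a * (x - y))%Z -> x = y.
Proof.
move=> N0 ca2 oN a0 ap hx hy hd.
have ca : coprime N `|a| by apply: coprime_small => //; rewrite absz_gt0.
have c2 : coprime N 2 by rewrite coprimen2.
have : (N%:Z %| x - y)%Z.
  move: hd; rewrite !dvdzE !abszM /=.
  rewrite Gauss_dvdr // !coprimeMr ca2 ca andbT /=; exact c2.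
move=> h; apply/eqP; rewrite -subr_eq0; apply/eqP; apply: (@dvd_small _ _ _ h).
  lia.
apply/andP; split; lia.
Qed.

Lemma gmap_bd (N : nat) a2 a1 z : (0 < N)%N -> 0 <= gmap N a2 a1 z < N%:Z.
Proof.
move=> N0; rewrite /gmap modz_ge0 ?ltz_pmod //=; lia.
Qed.

Lemma fmap_eq (N K : nat) a2 a1 z : (0 < N)%N -> (N <= K)%N ->
  fmap N K a2 a1 z = gmap N a2 a1 z.
Proof.
move=> N0 NK; rewrite /fmap /phimap modz_small //.
have := gmap_bd N a2 a1 z N0; lia.
Qed.

Theorem lemma3 (N K : nat) (a2 a1 : 'I_N) :
  (0 < N)%N -> odd N -> (N <= K)%N -> coprime a2 N ->
  let p := pdiv N in
  (K = N ->
     forall a b : int, - (p%:Z) < a < p%:Z -> a != 0 ->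
       - (N%:Z) < b < N%:Z -> at_most_one_sol N K a2 a1 a b) /\
  ((N < K)%N -> (K < 2 * N - 1)%N ->
     forall a b : int, - (p%:Z) < a < p%:Z -> a != 0 ->
       - (K%:Z) + N%:Z - 1 < b < K%:Z - N%:Z + 1 ->
       at_most_one_sol N K a2 a1 a b) /\
  ((2 * N - 1 <= K)%N ->
     forall a b : int, - (p%:Z) < a < p%:Z -> a != 0 ->
       - (K%:Z) < b < K%:Z -> at_most_one_sol N K a2 a1 a b).
Proof.
move=> N0 oN NK ca2 p.
set F := fun (a : int) (x : 'I_N) =>
  fmap N K a2 a1 (((x%:Z) + a) %% (N%:Z))%Z - fmap N K a2 a1 (x%:Z).
have Fbd : forall a (x : 'I_N), - N%:Z < F a x < N%:Z.
  move=> a x; rewrite /F !fmap_eq //.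
  have := gmap_bd N a2 a1 (((x%:Z) + a) %% (N%:Z))%Z N0.
  have := gmap_bd N a2 a1 x N0. lia.
have key : forall (a : int) (x y : 'I_N), - (p%:Z) < a < p%:Z -> a != 0 ->
    (N%:Z %| F a x - F a y)%Z -> x = y.
  move=> a x y ap a0 hd.
  suff : (x%:Z = y%:Z) by case=> /val_inj.
  apply: (@core N a2 a) => //.
  - by rewrite /= coprime_sym.
  - rewrite /p in ap; lia.
  - have := ltn_ord x; lia.
  - have := ltn_ord y; lia.
  have hx := Fcong N a2 a1 a x.
  have hy := Fcong N a2 a1 a y.
  have := rpredD (rpredB hd hx) hy.
  rewrite /F !fmap_eq //.
  congr (_ %| _)%Z; ring.
have solK : forall a b (x : 'I_N), is_sol K a2 a1 a b x -> (K%:Z %| F a x - b)%Z.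
  by move=> a b x h; rewrite -eqz_mod_dvd; apply/eqP.
split; [|split].
- move=> KN a b ap a0 _ x y hx hy; apply: (key a) => //.
  have := rpredB (solK _ _ _ hx) (solK _ _ _ hy).
  rewrite KN; congr (_ %| _)%Z; ring.
- move=> NK' K2 a b ap a0 hb x y hx hy; apply: (key a) => //.
  have ex : F a x - b = 0.
    apply: (@dvd_small K%:Z _ _ (solK _ _ _ hx)); first lia.
    move: (Fbd a x) hb; move: (F a x) => f; clear -NK' K2; lia.
  have ey : F a y - b = 0.
    apply: (@dvd_small K%:Z _ _ (solK _ _ _ hy)); first lia.
    move: (Fbd a y) hb; move: (F a y) => f; clear -NK' K2; lia.
  have -> : F a x - F a y = (F a x - b) - (F a y - b) by ring.
  rewrite ex ey subrr.
  exact: dvdz0.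
- move=> K2 a b ap a0 hb x y hx hy; apply: (key a) => //.
  have e : F a x - F a y = 0.
    apply: (@dvd_small K%:Z); first lia.
      have := rpredB (solK _ _ _ hx) (solK _ _ _ hy).
      congr (_ %| _)%Z; ring.
    move: (Fbd a x) (Fbd a y); move: (F a x) (F a y) => f g; clear -K2 N0; lia.
  rewrite e; exact: dvdz0.
Qed.
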